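(* Let $F$ be a field and let $f=\sum_{\sigma\in S_d}\lambda_\sigma x_{\sigma(1)}\cdots x_{\sigma(d)}\in F\langle X\rangle$ be a multilinear polynomial of degree $d\ge 2$ with $\sum_{\sigma\in S_d}\lambda_\sigma\neq 0$. Let $\mathcal A$ be a unital $F$-algebra and let $\phi:\mathcal A\to\mathcal A$ be a linear map that preserves zeros of $f$ and satisfies $\phi(1)\in F^*\cdot 1$. If $a,b\in\mathcal A$ satisfy $ab=ba=0$, then $\phi(a)\phi(b)+\phi(b)\phi(a)=0$.
   Context: $F\langle X\rangle$ is the free algebra over $F$ in noncommuting indeterminates $x_1,x_2,\ldots$. A map $\phi$ on an $F$-algebra $\mathcal A$ preserves zeros of $f$ if for all $a_1,\ldots,a_d\in\mathcal A$, $f(a_1,\ldots,a_d)=0$ implies $f(\phi(a_1),\ldots,\phi(a_d))=0$. *)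

(* Defs.v *)
From HB Require Import structures.
From mathcomp Require Import all_boot all_order all_algebra all_fingroup.
Set Implicit Arguments. Unset Strict Implicit. Unset Printing Implicit Defensive.
Import GRing.Theory.
Local Open Scope ring_scope.

Definition mlin_eval (F : fieldType) (A : algType F) (d : nat)
    (lam : {perm 'I_d} -> F) (a : 'I_d -> A) : A :=
  \sum_(s : {perm 'I_d}) lam s *: \prod_(i < d) a (s i).

Definition preserves_zeros (F : fieldType) (A : algType F) (d : nat)
    (lam : {perm 'I_d} -> F) (phi : A -> A) : Prop :=
  forall a : 'I_d -> A, mlin_eval lam a = 0 -> mlin_eval lam (fun i => phi (a i)) = 0.

(* Main.v *)
Require Import Defs.
From HB Require Import structures.
From mathcomp Require Import all_boot all_order all_algebra all_fingroup.
Import GRing.Theory.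
Local Open Scope ring_scope.
Set Implicit Arguments.

Section Aux.
Variables (F : fieldType) (A : algType F).

Lemma prod_filter (T : eqType) (i0 i1 : T) (g : T -> A) (c : F) :
  (forall k, k != i0 -> k != i1 -> g k = c%:A) ->
  forall s : seq T,
  \prod_(k <- s) g k =
  c ^+ (count (fun k => (k != i0) && (k != i1)) s) *:
   \prod_(k <- [seq k <- s | (k == i0) || (k == i1)]) g k.
Proof.
move=> Hg; elim=> [|k s IH]; first by rewrite !big_nil expr0 scale1r.
rewrite big_cons /= IH.
case: (boolP ((k == i0) || (k == i1))) => Hk /=.
  rewrite big_cons -scalerAr.
  by move: Hk; case: (k == i0); case: (k == i1).
move: Hk; rewrite negb_or => /andP [H0 H1]; rewrite H0 H1 /= Hg //.
by rewrite mulr_algl scalerA exprS.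
Qed.

Lemma two_list (T : eqType) (i0 i1 : T) (L : seq T) :
  i0 != i1 -> uniq L -> all (fun k => (k == i0) || (k == i1)) L ->
  i0 \in L -> i1 \in L -> L = [:: i0; i1] \/ L = [:: i1; i0].
Proof.
move=> H01; case: L => [|u [|v [|w t]]] //=.
- rewrite !inE => _ _ /eqP E1 /eqP E2. by move: H01; rewrite E1 E2 eqxx.
- rewrite !inE !andbT => Huv /andP [Hu Hv] _ _.
  move: H01 Huv; case/orP: Hu =>/eqP->; case/orP: Hv=>/eqP->; rewrite ?eqxx //; auto.
- move=> /and3P [Hu Hv _] /and4P [Hu' Hv' Hw' _] _ _.
  exfalso; move: H01 Hu Hv; rewrite !inE !negb_or.
  by case/orP: Hu' =>/eqP->; case/orP: Hv' =>/eqP->; case/orP: Hw'=>/eqP->;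
     rewrite ?eqxx ?andbF ?andbT.
Qed.

Lemma prod_perm (d : nat) (i0 i1 : 'I_d) (g : 'I_d -> A) (c : F)
  (s : {perm 'I_d}) :
  i0 != i1 ->
  (forall k, k != i0 -> k != i1 -> g k = c%:A) ->
  exists2 P : bool,
   (let L := [seq k <- [seq s i | i <- index_enum 'I_d] | (k == i0) || (k == i1)] in
    P = (L == [:: i0; i1]))
   & \prod_(i < d) g (s i) = c ^+ (d - 2) *: (if P then g i0 * g i1 else g i1 * g i0).
Proof.
move=> H01 Hg.
set S := [seq s i | i <- index_enum 'I_d].
set L := [seq k <- S | (k == i0) || (k == i1)].
have US : uniq S by rewrite map_inj_uniq ?index_enum_uniq //; apply: perm_inj.
have inS : forall k, k \in S.
  by move=> k; rewrite -[k](permKV s); apply: map_f; rewrite mem_index_enum.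
have HL : L = [:: i0; i1] \/ L = [:: i1; i0].
  apply: two_list => //; first by rewrite filter_uniq.
  - by apply/allP => k; rewrite mem_filter => /andP [].
  - by rewrite mem_filter eqxx inS.
  - by rewrite mem_filter eqxx orbT inS.
have szS : size S = d.
  rewrite size_map -[RHS]card_ord cardE; apply: perm_size; apply: uniq_perm.
  - exact: index_enum_uniq.
  - exact: enum_uniq.
  - by move=> i; rewrite mem_index_enum mem_enum.
have Hc : count (fun k => (k != i0) && (k != i1)) S = (d - 2)%N.
  have E := count_predC (fun k => (k == i0) || (k == i1)) S.
  have E2 : count (fun k => (k == i0) || (k == i1)) S = 2%N.
    by rewrite -size_filter -/L; case: HL => ->.
  have E3 : count (predC (fun k => (k == i0) || (k == i1))) S =
            count (fun k => (k != i0) && (k != i1)) S.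
    by apply: eq_count => k /=; rewrite negb_or.
  rewrite -E3; transitivity (size S - 2)%N; last by congr (_ - 2)%N; exact szS.
  by rewrite -E E2 addKn.
exists (L == [:: i0; i1]) => //.
have -> : \prod_(i < d) g (s i) = \prod_(k <- S) g k.
  by rewrite big_map.
rewrite (prod_filter _ _ _ _ _ Hg) -/L Hc.
case: HL => ->; rewrite ?eqxx !big_cons big_nil !mulr1 //.
by rewrite eqseq_cons eq_sym (negbTE H01).
Qed.

End Aux.


Theorem lemma3p1 (F : fieldType) (A : algType F) (d : nat)
    (lam : {perm 'I_d} -> F) (phi : {linear A -> A}) :
  (2 <= d)%N ->
  \sum_(s : {perm 'I_d}) lam s != 0 ->
  preserves_zeros lam phi ->
  (exists c : F, c != 0 /\ phi 1 = c%:A) ->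
  forall a b : A, a * b = 0 -> b * a = 0 ->
  phi a * phi b + phi b * phi a = 0.
Proof.
move=> Hd Hsum Hpz [c [Hc Hphi1]] a b Hab Hba.
have d0 : (0 < d)%N by apply: leq_trans Hd.
have d1 : (1 < d)%N by [].
pose i0 := Ordinal d0; pose i1 := Ordinal d1.
have H01 : i0 != i1 by [].
pose u := fun k => if k == i0 then a else if k == i1 then b else (1 : A).
pose v := fun k => if k == i0 then b else if k == i1 then a else (1 : A).
have E10 : (i1 == i0) = false by rewrite eq_sym (negbTE H01).
have Eu0 : u i0 = a by rewrite /u eqxx.
have Eu1 : u i1 = b by rewrite /u E10 eqxx.
have Ev0 : v i0 = b by rewrite /v eqxx.
have Ev1 : v i1 = a by rewrite /v E10 eqxx.
have Hu : forall k, k != i0 -> k != i1 -> u k = 1%:A.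
  by move=> k H0 H1; rewrite /u (negbTE H0) (negbTE H1) scale1r.
have Hv : forall k, k != i0 -> k != i1 -> v k = 1%:A.
  by move=> k H0 H1; rewrite /v (negbTE H0) (negbTE H1) scale1r.
have Hpu : forall k, k != i0 -> k != i1 -> phi (u k) = c%:A.
  by move=> k H0 H1; rewrite /u (negbTE H0) (negbTE H1).
have Hpv : forall k, k != i0 -> k != i1 -> phi (v k) = c%:A.
  by move=> k H0 H1; rewrite /v (negbTE H0) (negbTE H1).
have Eu : mlin_eval lam u = 0.
  rewrite /mlin_eval big1 // => s _.
  have [P _ ->] := @prod_perm _ _ _ _ _ _ _ s H01 Hu.
  by rewrite Eu0 Eu1; case: P; rewrite ?Hab ?Hba !scaler0.
have Ev : mlin_eval lam v = 0.
  rewrite /mlin_eval big1 // => s _.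
  have [P _ ->] := @prod_perm _ _ _ _ _ _ _ s H01 Hv.
  by rewrite Ev0 Ev1; case: P; rewrite ?Hab ?Hba !scaler0.
have E1 := Hpz _ Eu; have E2 := Hpz _ Ev.
have : mlin_eval lam (fun i => phi (u i)) + mlin_eval lam (fun i => phi (v i)) = 0.
  by rewrite E1 E2 addr0.
rewrite /mlin_eval -big_split /=.
under eq_bigr => s _.
  have [P HP ->] := @prod_perm _ _ _ _ _ (fun i => phi (u i)) _ s H01 Hpu.
  have [Q HQ ->] := @prod_perm _ _ _ _ _ (fun i => phi (v i)) _ s H01 Hpv.
  rewrite HQ -HP -scalerDr -scalerDr Eu0 Eu1 Ev0 Ev1.
  have -> : (if P then phi a * phi b else phi b * phi a) +
            (if P then phi b * phi a else phi a * phi b) =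
            phi a * phi b + phi b * phi a by clear HP HQ; case: P; rewrite // addrC.
  over.
rewrite /= -scaler_suml => /eqP; rewrite scaler_eq0 (negbTE Hsum) /=.
by rewrite scaler_eq0 expf_eq0 (negbTE Hc) andbF /= => /eqP.
Qed.
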